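(* Let $R$ be a commutative ring with identity containing the field $\mathbb{Q}$ of rational numbers as a subring with the same identity (equivalently, every nonzero integer is a unit in $R$). Then $R$ is a u-ring.
   Context: An ideal $I$ of $R$ is a u-ideal if whenever $I\subseteq I_1\cup\cdots\cup I_m$ for finitely many ideals $I_1,\dots,I_m$ of $R$, then $I\subseteq I_j$ for some $j$. A ring $R$ is a u-ring if every ideal of $R$ is a u-ideal. *)

(* Defs.v *)
From mathcomp Require Import all_boot all_algebra.
Set Implicit Arguments. Unset Strict Implicit. Unset Printing Implicit Defensive.
Import GRing.Theory.
Local Open Scope ring_scope.

Definition ideal (R : comNzRingType) (I : R -> Prop) : Prop :=
  [/\ I 0,
      (forall x y, I x -> I y -> I (x + y)) &
      (forall a x, I x -> I (a * x))].

Definition u_ideal (R : comNzRingType) (I : R -> Prop) : Prop :=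
  forall (m : nat) (J : 'I_m -> R -> Prop),
    (forall j, ideal (J j)) ->
    (forall x, I x -> exists j, J j x) ->
    exists j, forall x, I x -> J j x.

Definition u_ring (R : comNzRingType) : Prop :=
  forall I : R -> Prop, ideal I -> u_ideal I.

(* Main.v *)
Require Import Defs.
From mathcomp Require Import all_boot all_algebra.
From Stdlib Require Import Classical ClassicalEpsilon.
Local Open Scope ring_scope.
Import GRing.Theory.


Lemma ideal_sub {R : comNzRingType} {I : R -> Prop} {x y : R} :
  ideal I -> I x -> I y -> I (x - y).
Proof.
case=> _ hD hM hx hy; apply: hD => //.
by rewrite -mulN1r; apply: hM.
Qed.

Lemma diff_in {R : comNzRingType} (hQ : forall n : nat, (0 < n)%N -> exists y : R, n%:R * y = 1)
  {J : R -> Prop} {a b : R} {k k' : nat} : ideal J -> (k < k')%N ->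
  J (b + k%:R * a) -> J (b + k'%:R * a) -> J a.
Proof.
move=> hJ lt h1 h2.
have := ideal_sub hJ h2 h1.
have -> : b + k'%:R * a - (b + k%:R * a) = (k' - k)%N%:R * a.
  by rewrite natrB ?(ltnW lt) // mulrBl; rewrite opprD addrACA subrr add0r.
have [y hy] : exists y : R, (k' - k)%N%:R * y = 1 by apply: hQ; rewrite subn_gt0.
move=> h; case: hJ => _ _ hM; have := hM y _ h.
by rewrite mulrA (mulrC y) hy mul1r.
Qed.

Theorem lemma7 (R : comNzRingType)
  (hQ : forall n : nat, (0 < n)%N -> exists y : R, n%:R * y = 1) :
  u_ring R.
Proof.
move=> I hI m; elim: m => [|m IH] J hJ hcov.
  have [I0 _ _] := hI; have [j _] := hcov 0 I0; by case: j.
pose J' := fun j : 'I_m => J (widen_ord (leqnSn m) j).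
case: (classic (forall x, I x -> exists j, J' j x)) => [hc|].
  have [j hj] := IH J' (fun j => hJ _) hc.
  by exists (widen_ord (leqnSn m) j).
move=> /not_all_ex_not [a ha].
have [Ia na] : I a /\ ~ exists j, J' j a.
  exact: imply_to_and.
have Jma : J ord_max a.
  have [j hj] := hcov a Ia.
  case: (ltnP j m) => hjm.
    by exfalso; apply: na; exists (Ordinal hjm); rewrite /J'; congr J: hj; apply: val_inj.
  have -> : ord_max = j by apply: val_inj => /=; apply/eqP; rewrite eqn_leq hjm -ltnS ltn_ord.
  done.
case: (classic (forall x, I x -> J ord_max x)) => [h|]; first by exists ord_max.
move=> /not_all_ex_not [b hb].
have [Ib nb] : I b /\ ~ J ord_max b.
  exact: imply_to_and.
have Ik : forall k : 'I_m.+1, I (b + (k : nat)%:R * a).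
  move=> k; case: hI => _ hD hM; exact: hD _ _ Ib (hM _ _ Ia).
have ex : forall k : 'I_m.+1, exists j : 'I_m, J' j (b + (k : nat)%:R * a).
  move=> k; have [j hj] := hcov _ (Ik k).
  case: (ltnP j m) => hjm.
    by exists (Ordinal hjm); rewrite /J'; congr J: hj; apply: val_inj.
  exfalso; apply: nb.
  have ej : j = ord_max by apply: val_inj => /=; apply/eqP; rewrite eqn_leq hjm andbT -ltnS ltn_ord.
  rewrite ej in hj.
  have [_ _ hM] := hJ ord_max.
  have := ideal_sub (hJ ord_max) hj (hM (k : nat)%:R _ Jma).
  by rewrite addrK.
pose f := fun k => proj1_sig (constructive_indefinite_description _ (ex k)).
have hf : forall k, J' (f k) (b + (k : nat)%:R * a).
  by move=> k; rewrite /f; case: constructive_indefinite_description.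
case: (boolP (injectiveb f)) => [/injectiveP inj|ninj].
  by have := leq_card _ inj; rewrite !card_ord ltnn.
move/injectivePn: ninj => [k [k' nk fk]].
exfalso; apply: na; exists (f k).
have := hf k'; rewrite -fk => h2; have h1 := hf k.
case: (ltngtP k k') => c.
- exact: (diff_in hQ (hJ _) c h1 h2).
- exact: (diff_in hQ (hJ _) c h2 h1).
- by exfalso; move/negP: nk; apply; apply/eqP/val_inj.
Qed.
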